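(* Let $\underline\phi\le\overline\phi$ and $\underline\chi\le\overline\chi$ be functions $[0,1]\to[0,1]$ such that the pairs involved satisfy (F1)–(F3), and let \[\mathcal C^{\mathrm{MM}}=\{C^{\mathrm{MM}}_{\phi,\chi}:\ \underline\phi\le\phi\le\overline\phi,\ \underline\chi\le\chi\le\overline\chi,\ \phi,\chi \text{ satisfy (F1)–(F3)}\}.\] Then $\mathcal C^{\mathrm{MM}}$ has pointwise minimal element $C^{\mathrm{MM}}_{\underline\phi,\overline\chi}$ and maximal element $C^{\mathrm{MM}}_{\overline\phi,\underline\chi}$, i.e. $C^{\mathrm{MM}}_{\underline\phi,\overline\chi}(u,v)\le C^{\mathrm{MM}}_{\phi,\chi}(u,v)\le C^{\mathrm{MM}}_{\overline\phi,\underline\chi}(u,v)$ for every $C^{\mathrm{MM}}_{\phi,\chi}\in\mathcal C^{\mathrm{MM}}$ and $u,v\in[0,1]$.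
   Context: Conditions on $\phi,\chi:[0,1]\to[0,1]$: (F1) $\phi(0)=\chi(0)=0$, $\phi(1)=\chi(1)=1$; (F2) $\phi,\chi$ non-decreasing; (F3) $\phi(u)/u$ on $(0,1]$ and $\chi_*(w)=\frac{1-\chi(w)}{w-\chi(w)}$ on $[0,1]$ (values in $[1,\infty]$) are non-increasing. Maxmin copula: $C^{\mathrm{MM}}_{\phi,\chi}(u,w)=uw+\min\{u(1-w),(\phi(u)-u)(w-\chi(w))\}$. *)

(* Defs.v *)
From mathcomp Require Import all_boot all_order all_algebra.
From mathcomp Require Import reals constructive_ereal.
Set Implicit Arguments. Unset Strict Implicit. Unset Printing Implicit Defensive.
Import Order.TTheory GRing.Theory Num.Theory.
Local Open Scope ring_scope.

Section MaxMin.
Variable R : realType.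

Definition maps01 (f : R -> R) : Prop :=
  forall x, 0 <= x -> x <= 1 -> 0 <= f x /\ f x <= 1.

Definition F1 (f : R -> R) : Prop := f 0 = 0 /\ f 1 = 1.

Definition F2 (f : R -> R) : Prop :=
  forall x y, 0 <= x -> x <= y -> y <= 1 -> f x <= f y.

Definition F3_phi (phi : R -> R) : Prop :=
  forall x y, 0 < x -> x <= y -> y <= 1 -> phi y / y <= phi x / x.

Definition chi_star (chi : R -> R) (w : R) : \bar R :=
  if w - chi w == 0 then +oo%E else ((1 - chi w) / (w - chi w))%:E.

(* At w = 1 the expression is 0/0; any value in [1,+oo] there (e.g. the
   convention chi_*(1) = 1) makes the condition at w = 1 automatic, so the
   condition is imposed on [0,1). *)
Definition F3_chi (chi : R -> R) : Prop :=
  (forall w, 0 <= w -> w < 1 -> (1%:E <= chi_star chi w)%E) /\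
  (forall x y, 0 <= x -> x <= y -> y < 1 -> (chi_star chi y <= chi_star chi x)%E).

Definition admissible_phi (phi : R -> R) : Prop :=
  [/\ maps01 phi, F1 phi, F2 phi & F3_phi phi].

Definition admissible_chi (chi : R -> R) : Prop :=
  [/\ maps01 chi, F1 chi, F2 chi & F3_chi chi].

Definition C_MM (phi chi : R -> R) (u w : R) : R :=
  u * w + Num.min (u * (1 - w)) ((phi u - u) * (w - chi w)).

Definition le01 (f g : R -> R) : Prop :=
  forall x, 0 <= x -> x <= 1 -> f x <= g x.

End MaxMin.

(* Main.v *)
Require Import Defs.
From mathcomp Require Import all_boot all_order all_algebra.
From mathcomp Require Import reals constructive_ereal.
From mathcomp Require Import lra.
Import Order.TTheory GRing.Theory Num.Theory.
Local Open Scope ring_scope.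

Lemma phi_ge {R : realType} {phi : R -> R} {u : R} :
  admissible_phi phi -> 0 <= u -> u <= 1 -> u <= phi u.
Proof.
case=> _ [h0 h1] _ h3 u0 u1.
have [->|uneq] := eqVneq u 0; first by rewrite h0.
have up : 0 < u by rewrite lt_neqAle eq_sym uneq u0.
have := h3 u 1 up u1 (lexx _).
by rewrite h1 divr1 ler_pdivlMr // mul1r.
Qed.

Lemma chi_le {R : realType} {chi : R -> R} {w : R} :
  admissible_chi chi -> 0 <= w -> w <= 1 -> chi w <= w.
Proof.
case=> hm [h0 h1] _ [h3 _] w0 w1.
have [->|wneq] := eqVneq w 1; first by rewrite h1.
have wl : w < 1 by rewrite lt_neqAle wneq w1.
have := h3 w w0 wl; rewrite /chi_star.
case: eqP => [h _|hne]; first lra.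
rewrite lee_fin => H; rewrite leNgt; apply/negP => hlt; move: H.
have bn : w - chi w < 0 by rewrite subr_lt0.
have [a0 a1] := hm w w0 w1.
rewrite ler_ndivlMr // mul1r => H; lra.
Qed.

Theorem proposition7 (R : realType) (phil phiu chil chiu : R -> R) :
  admissible_phi phil -> admissible_phi phiu ->
  admissible_chi chil -> admissible_chi chiu ->
  le01 phil phiu -> le01 chil chiu ->
  forall (phi chi : R -> R),
    admissible_phi phi -> admissible_chi chi ->
    le01 phil phi -> le01 phi phiu ->
    le01 chil chi -> le01 chi chiu ->
    forall u v : R, 0 <= u -> u <= 1 -> 0 <= v -> v <= 1 ->
      C_MM phil chiu u v <= C_MM phi chi u v /\
      C_MM phi chi u v <= C_MM phiu chil u v.
Proof.
move=> Apl Apu Acl Acu _ _ phi chi Ap Ac H1 H2 H3 H4 u v u0 u1 v0 v1.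
have a1 := phi_ge Apl u0 u1.
have a2 := phi_ge Ap u0 u1.
have a3 := phi_ge Apu u0 u1.
have b1 := chi_le Acl v0 v1.
have b2 := chi_le Ac v0 v1.
have b3 := chi_le Acu v0 v1.
have c1 := H1 u u0 u1. have c2 := H2 u u0 u1.
have c3 := H3 v v0 v1. have c4 := H4 v v0 v1.
have m : forall a b c d : R, a <= c -> b <= d -> Num.min a b <= Num.min c d.
  move=> a b c d ac bd; rewrite le_min; apply/andP; split.
    by apply: le_trans ac; rewrite ge_min lexx.
  by apply: le_trans bd; rewrite ge_min lexx orbT.
rewrite /C_MM !lerD2l; split; apply: m => //.
  by apply: ler_pM; lra.
by apply: ler_pM; lra.
Qed.
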